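(* Let $R>0$, $n\ge2$, and let $u,\tilde u$ be radially symmetric functions with $u,\tilde u\in C^{2,1}((B_R\setminus\{0\})\times(0,\infty))\cap C(\overline{B_R}\times[0,\infty))$, $\sup u_r\le0$, $\sup\tilde u_r\le0$, which both solve $(\ast)$ with the same initial datum $u_0$. Then $u=\tilde u$.
   Context: $B_R=\{x\in\mathbb R^n:|x|<R\}$; radial functions written in $r=|x|$, subscript $r$ = radial derivative. $u^*(r):=-\sqrt[3]{9n-15}\,r^{1/3}$. Problem $(\ast)$: $u_t=\Delta u+uu_r^3$ in $(B_R\setminus\{0\})\times(0,\infty)$, $u(0,t)=0$ and $u(R,t)=u^*(R)$ for $t>0$, $u(\cdot,0)=u_0$ in $\overline{B_R}$. *)

(* Defs.v *)
From Stdlib Require Import Reals Lra.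
Open Scope R_scope.

(* Radially symmetric functions u(x,t) = v(|x|,t) are represented by their
   profile v : R -> R -> R, v r t, with r = |x| in [0,R], t >= 0. *)

Definition continuous2_on (D : R -> R -> Prop) (f : R -> R -> R) : Prop :=
  forall r t, D r t ->
  forall eps, 0 < eps -> exists delta, 0 < delta /\
    forall r' t', D r' t' -> Rabs (r' - r) < delta -> Rabs (t' - t) < delta ->
      Rabs (f r' t' - f r t) < eps.

(* Punctured open cylinder (B_R \ {0}) x (0,oo), in radial variable. *)
Definition open_dom (Rb : R) (r t : R) : Prop := 0 < r < Rb /\ 0 < t.
Definition closed_dom (Rb : R) (r t : R) : Prop := 0 <= r <= Rb /\ 0 <= t.

Definition C21_radial (Rb : R) (v vr vrr vt : R -> R -> R) : Prop :=
  (forall r t, open_dom Rb r t ->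
     derivable_pt_lim (fun s => v s t) r (vr r t) /\
     derivable_pt_lim (fun s => vr s t) r (vrr r t) /\
     derivable_pt_lim (fun s => v r s) t (vt r t)) /\
  continuous2_on (open_dom Rb) v /\
  continuous2_on (open_dom Rb) vr /\
  continuous2_on (open_dom Rb) vrr /\
  continuous2_on (open_dom Rb) vt.

(* u^*(r) = - cbrt(9n-15) r^{1/3}, for r > 0 and n >= 2 (so 9n-15 > 0). *)
Definition ustar (n : nat) (r : R) : R :=
  - (Rpower (9 * INR n - 15) (1/3) * Rpower r (1/3)).

(* v is a radial solution of ( * ) with initial datum u0, in the class
   C^{2,1}((B_R\{0}) x (0,oo)) ∩ C(closure(B_R) x [0,oo)), with sup u_r <= 0.
   For radial u, Delta u = v_rr + (n-1)/r v_r. *)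
Definition radial_solution (n : nat) (Rb : R) (u0 : R -> R) (v : R -> R -> R)
  : Prop :=
  exists vr vrr vt : R -> R -> R,
    C21_radial Rb v vr vrr vt /\
    continuous2_on (closed_dom Rb) v /\
    (forall r t, open_dom Rb r t -> vr r t <= 0) /\
    (forall r t, open_dom Rb r t ->
       vt r t = vrr r t + (INR n - 1) / r * vr r t + v r t * (vr r t) ^ 3) /\
    (forall t, 0 < t -> v 0 t = 0) /\
    (forall t, 0 < t -> v Rb t = ustar n Rb) /\
    (forall r, 0 <= r <= Rb -> v r 0 = u0 r).

(* Main.v *)
Require Import Defs.
From Stdlib Require Import Reals Lra Classical ClassicalEpsilon.
From Coquelicot Require Compactness.
Open Scope R_scope.

Definition rect (a b c d r t : R) : Prop := a <= r <= b /\ c <= t <= d.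

Lemma unif_cont a b c d (f : R -> R -> R) :
  (forall r t, rect a b c d r t -> forall eps, 0 < eps -> exists delta, 0 < delta /\
    forall r' t', rect a b c d r' t' -> Rabs (r' - r) < delta -> Rabs (t' - t) < delta ->
      Rabs (f r' t' - f r t) < eps) ->
  forall eps, 0 < eps -> exists dl, 0 < dl /\ forall x y x' y',
    rect a b c d x y -> rect a b c d x' y' -> Rabs (x - x') < dl -> Rabs (y - y') < dl ->
    Rabs (f x y - f x' y') < eps.
Proof.
  intros Hc eps He.
  assert (H' : forall u v, exists dl, 0 < dl /\ (rect a b c d u v -> forall r' t', rect a b c d r' t' ->
     Rabs (r' - u) < dl -> Rabs (t' - v) < dl -> Rabs (f r' t' - f u v) < eps / 2)).
  { intros u v. destruct (classic (rect a b c d u v)) as [Hr|Hr].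
    - destruct (Hc u v Hr (eps/2)) as [dl [Hd1 Hd2]]; [lra|]. exists dl; split; auto.
    - exists 1; split; [lra|]. intro; contradiction. }
  set (del := fun u v => proj1_sig (constructive_indefinite_description _ (H' u v))).
  assert (Hdel : forall u v, 0 < del u v / 2).
  { intros u v. unfold del. destruct (constructive_indefinite_description _ (H' u v)) as [x [Hx Hx']]; simpl; lra. }
  destruct (Compactness.compactness_value_2d a b c d (fun u v => mkposreal _ (Hdel u v))) as [dd Hdd].
  exists dd. split; [apply cond_pos|].
  intros x y x' y' [Hx Hy] Hr' Hxx Hyy.
  apply Rnot_le_lt; intro Hle.
  apply (Hdd x y Hx Hy). intros [u [v [Hu [Hv [Hxu [Hyv Hdu]]]]]].
  simpl in *.
  assert (Hspec := proj2 (proj2_sig (constructive_indefinite_description _ (H' u v)))).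
  change (rect a b c d u v -> forall r' t', rect a b c d r' t' -> Rabs (r' - u) < del u v -> Rabs (t' - v) < del u v -> Rabs (f r' t' - f u v) < eps / 2) in Hspec.
  assert (E1 := Hspec (conj Hu Hv) x y (conj Hx Hy)).
  assert (E2 := Hspec (conj Hu Hv) x' y' Hr').
  apply Rabs_def2 in Hxu. apply Rabs_def2 in Hyv. apply Rabs_def2 in Hxx. apply Rabs_def2 in Hyy.
  assert (E1' := E1 ltac:(apply Rabs_def1; lra) ltac:(apply Rabs_def1; lra)).
  assert (E2' := E2 ltac:(apply Rabs_def1; lra) ltac:(apply Rabs_def1; lra)).
  apply Rabs_def2 in E1'. apply Rabs_def2 in E2'.
  revert Hle; unfold Rabs at 1; destruct Rcase_abs; lra.
Qed.

Definition cl (lo hi x : R) := Rmax lo (Rmin hi x).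
Lemma cl_in lo hi x : lo <= hi -> lo <= cl lo hi x <= hi.
Proof. intros; unfold cl, Rmax, Rmin; repeat destruct Rle_dec; lra. Qed.
Lemma cl_id lo hi x : lo <= x <= hi -> cl lo hi x = x.
Proof. intros; unfold cl, Rmax, Rmin; repeat destruct Rle_dec; lra. Qed.
Lemma cl_lip lo hi x y : lo <= hi -> Rabs (x - y) < 1 -> True. Proof. auto. Qed.
Lemma cl_lip' lo hi x y dl : lo <= hi -> Rabs (x - y) < dl -> Rabs (cl lo hi x - cl lo hi y) < dl.
Proof. intros H H1; apply Rabs_def2 in H1; apply Rabs_def1;
  unfold cl, Rmax, Rmin; repeat destruct Rle_dec; lra. Qed.

Lemma contpt_of_unif g : (forall eps, 0 < eps -> exists dl, 0 < dl /\
   forall x y, Rabs (x - y) < dl -> Rabs (g x - g y) < eps) -> forall x, continuity_pt g x.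
Proof.
  intros H x eps He. destruct (H eps He) as [dl [Hd Hu]]. exists dl; split; auto.
  intros y [_ Hy]. simpl in *. unfold R_dist in *. apply Hu; auto.
Qed.

Lemma ext2 a b c d (f : R -> R -> R) : a <= b -> c <= d ->
  (forall r t, rect a b c d r t -> forall eps, 0 < eps -> exists delta, 0 < delta /\
    forall r' t', rect a b c d r' t' -> Rabs (r' - r) < delta -> Rabs (t' - t) < delta ->
      Rabs (f r' t' - f r t) < eps) ->
  exists r0 t0, rect a b c d r0 t0 /\ forall r t, rect a b c d r t -> f r t <= f r0 t0.
Proof.
  intros Hab Hcd Hc.
  set (F := fun x y => f (cl a b x) (cl c d y)).
  assert (HU : forall eps, 0 < eps -> exists dl, 0 < dl /\ forall x y x' y',
     Rabs (x - x') < dl -> Rabs (y - y') < dl -> Rabs (F x y - F x' y') < eps).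
  { intros eps He. destruct (unif_cont a b c d f Hc eps He) as [dl [Hd Hu]].
    exists dl; split; auto. intros. unfold F. apply Hu.
    - split; apply cl_in; auto.
    - split; apply cl_in; auto.
    - apply cl_lip'; auto.
    - apply cl_lip'; auto. }
  assert (Hr : forall t, exists rm, (forall r, a <= r <= b -> F r t <= F rm t) /\ a <= rm <= b).
  { intro t. apply continuity_ab_maj; auto. intros. apply contpt_of_unif.
    intros eps He. destruct (HU eps He) as [dl [Hd Hu]]. exists dl; split; auto.
    intros. apply Hu; auto. rewrite Rminus_diag, Rabs_R0; auto. }
  set (rs := fun t => proj1_sig (constructive_indefinite_description _ (Hr t))).
  assert (Hrs : forall t, (forall r, a <= r <= b -> F r t <= F (rs t) t) /\ a <= rs t <= b).
  { intro t. exact (proj2_sig (constructive_indefinite_description _ (Hr t))). }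
  set (m := fun t => F (rs t) t).
  destruct (continuity_ab_maj m c d Hcd) as [t0 [Ht0 Ht0']].
  { intros. apply contpt_of_unif. intros eps He. destruct (HU (eps/2)) as [dl [Hd Hu]]; [lra|].
    exists dl; split; auto. intros x y Hxy. unfold m.
    assert (E1 := Hu (rs x) x (rs x) y ltac:(rewrite Rminus_diag, Rabs_R0; auto) Hxy).
    assert (E2 := Hu (rs y) y (rs y) x ltac:(rewrite Rminus_diag, Rabs_R0; auto)
       ltac:(rewrite Rabs_minus_sym; auto)).
    assert (G1 := proj1 (Hrs y) (rs x) (proj2 (Hrs x))).
    assert (G2 := proj1 (Hrs x) (rs y) (proj2 (Hrs y))).
    apply Rabs_def2 in E1. apply Rabs_def2 in E2. apply Rabs_def1; lra. }
  exists (rs t0), t0. split.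
  - split; auto. apply Hrs.
  - intros r t [H1 H2].
    assert (E := proj1 (Hrs t) r H1). assert (E' := Ht0 t H2). unfold m, F in *.
    rewrite (cl_id a b r), (cl_id c d t), (cl_id a b (rs t0)), (cl_id c d t0) in * by (auto; apply Hrs).
    lra.
Qed.

Lemma max_d0 f a b c l : a < c < b -> derivable_pt_lim f c l ->
  (forall x, a < x < b -> f x <= f c) -> l = 0.
Proof.
  intros Hc Hd Hm.
  pose (pr := exist (fun l => derivable_pt_lim f c l) l Hd : derivable_pt f c).
  change l with (derive_pt f c pr).
  apply (deriv_maximum f a b c pr); try lra. intros; apply Hm; lra.
Qed.

Lemma max_left f a c l : a < c -> derivable_pt_lim f c l ->
  (forall x, a < x < c -> f x <= f c) -> 0 <= l.
Proof.
  intros Hc Hd Hm. apply Rnot_lt_le; intro Hl.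
  destruct (Hd (- l)) as [dl Hdl]; [lra|].
  set (h := - Rmin (dl/2) ((c - a)/2)).
  assert (Hh1 : h < 0) by (unfold h, Rmin; destruct Rle_dec; destruct dl; simpl in *; lra).
  assert (Hh2 : Rabs h < dl) by (unfold h, Rmin; rewrite Rabs_Ropp; destruct Rle_dec; destruct dl; simpl in *;
       rewrite Rabs_right; lra).
  assert (Hh3 : a < c + h) by (unfold h, Rmin; destruct Rle_dec; destruct dl; simpl in *; lra).
  assert (E := Hdl h ltac:(lra) Hh2). apply Rabs_def2 in E.
  assert (Hq : (f (c + h) - f c) / h < 0) by lra.
  assert (Hm' := Hm (c + h) ltac:(lra)).
  assert (0 <= (f (c + h) - f c) / h).
  { unfold Rdiv. replace ((f (c + h) - f c) * / h) with ((f c - f (c + h)) * / - h)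
      by (field; lra). apply Rmult_le_pos; [lra|]. apply Rlt_le, Rinv_0_lt_compat; lra. }
  lra.
Qed.

Lemma max_second f g g' a b c : a < c < b ->
  (forall x, a < x < b -> derivable_pt_lim f x (g x)) -> g c = 0 ->
  derivable_pt_lim g c g' -> (forall x, a < x < b -> f x <= f c) -> g' <= 0.
Proof.
  intros Hc Hf Hg0 Hd Hm. apply Rnot_lt_le; intro Hl.
  destruct (Hd g') as [dl Hdl]; [lra|].
  set (h := Rmin (dl/2) ((b - c)/2)).
  assert (Hh1 : 0 < h) by (unfold h, Rmin; destruct Rle_dec; destruct dl; simpl in *; lra).
  assert (Hh2 : h < dl) by (unfold h, Rmin; destruct Rle_dec; destruct dl; simpl in *; lra).
  assert (Hh3 : c + h < b) by (unfold h, Rmin; destruct Rle_dec; destruct dl; simpl in *; lra).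
  destruct (MVT_cor2 f g c (c + h) ltac:(lra)) as [xi [Hxi1 Hxi2]].
  { intros; apply Hf; lra. }
  assert (Hgx : 0 < g xi).
  { assert (E := Hdl (xi - c) ltac:(lra) ltac:(rewrite Rabs_right; lra)).
    replace (c + (xi - c)) with xi in E by ring. rewrite Hg0 in E. apply Rabs_def2 in E.
    assert (0 < (g xi - 0) / (xi - c)) by lra.
    unfold Rdiv in H. rewrite Rminus_0_r in H.
    apply (Rmult_lt_reg_r (/ (xi - c))); [apply Rinv_0_lt_compat; lra|]. lra. }
  assert (Hm' := Hm (c + h) ltac:(lra)).
  assert (0 < g xi * (c + h - c)) by (apply Rmult_lt_0_compat; lra).
  lra.
Qed.

Lemma core n Rb u0 u ut : 0 < Rb -> radial_solution n Rb u0 u -> radial_solution n Rb u0 ut ->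
  forall r t, 0 <= r <= Rb -> 0 <= t -> u r t <= ut r t.
Proof.
  intros HRb [vr [vrr [vt [[Hd [_ [_ [_ _]]]] [Hcc [Hneg [Heq [H0 [HR Hi]]]]]]]]]
    [vr' [vrr' [vt' [[Hd' [_ [_ [_ _]]]] [Hcc' [Hneg' [Heq' [H0' [HR' Hi']]]]]]]]] r t Hr Ht.
  apply Rnot_lt_le; intro Hlt.
  set (w1 := u r t - ut r t).
  set (eps := w1 / (2 * (t + 1))).
  assert (Heps : 0 < eps) by (unfold eps, w1; apply Rdiv_lt_0_compat; lra).
  assert (Hepst : eps * t < w1 / 2).
  { unfold eps. unfold Rdiv. rewrite Rinv_mult.
    assert (0 < w1) by (unfold w1; lra).
    assert (t * / (t + 1) < 1).
    { apply (Rmult_lt_reg_r (t + 1)); [lra|]. rewrite Rmult_assoc, Rinv_l by lra. lra. }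
    replace (w1 * (/ 2 * / (t + 1)) * t) with (w1 / 2 * (t * / (t + 1))) by (field; lra).
    assert (w1 / 2 * (t * / (t + 1)) < w1 / 2 * 1) by (apply Rmult_lt_compat_l; lra). lra. }
  set (z := fun x s => u x s - ut x s - eps * s).
  destruct (ext2 0 Rb 0 t z ltac:(lra) ltac:(lra)) as [r0 [t0 [[Hr0 Ht0] Hmax]]].
  { intros x s [Hx Hs] e He.
    destruct (Hcc x s ltac:(split; lra) (e/3)) as [d1 [Hd1 Hc1]]; [lra|].
    destruct (Hcc' x s ltac:(split; lra) (e/3)) as [d2 [Hd2 Hc2]]; [lra|].
    set (d3 := e / (3 * (eps + 1))).
    assert (Hd3 : 0 < d3) by (unfold d3; apply Rdiv_lt_0_compat; lra).
    exists (Rmin d1 (Rmin d2 d3)). split.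
    { unfold Rmin; repeat destruct Rle_dec; lra. }
    intros x' s' [Hx' Hs'] Ha Hb.
    assert (Ha1 : Rabs (x' - x) < d1) by (unfold Rmin in Ha; repeat destruct Rle_dec; lra).
    assert (Ha2 : Rabs (x' - x) < d2) by (unfold Rmin in Ha; repeat destruct Rle_dec; lra).
    assert (Hb1 : Rabs (s' - s) < d1) by (unfold Rmin in Hb; repeat destruct Rle_dec; lra).
    assert (Hb2 : Rabs (s' - s) < d2) by (unfold Rmin in Hb; repeat destruct Rle_dec; lra).
    assert (Hb3 : Rabs (s' - s) < d3) by (unfold Rmin in Hb; repeat destruct Rle_dec; lra).
    assert (E1 := Hc1 x' s' ltac:(split; lra) Ha1 Hb1).
    assert (E2 := Hc2 x' s' ltac:(split; lra) Ha2 Hb2).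
    apply Rabs_def2 in E1. apply Rabs_def2 in E2. apply Rabs_def2 in Hb3.
    assert (eps * d3 < e / 3).
    { unfold d3. replace (eps * (e / (3 * (eps + 1)))) with (e / 3 * (eps / (eps + 1))) by (field; lra).
      assert (eps / (eps + 1) < 1).
      { apply (Rmult_lt_reg_r (eps + 1)); [lra|]. unfold Rdiv. rewrite Rmult_assoc, Rinv_l by lra. lra. }
      assert (e / 3 * (eps / (eps + 1)) < e / 3 * 1) by (apply Rmult_lt_compat_l; lra). lra. }
    assert (Habs : Rabs (eps * (s' - s)) < e / 3).
    { rewrite Rabs_mult, Rabs_right by lra.
      apply Rle_lt_trans with (eps * d3); [|lra].
      apply Rmult_le_compat_l; [lra|]. apply Rlt_le, Rabs_def1; lra. }
    apply Rabs_def2 in Habs.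
    unfold z. apply Rabs_def1; lra. }
  assert (Hz : z r t <= z r0 t0) by (apply Hmax; split; lra).
  assert (Ezr : z r t = w1 - eps * t) by reflexivity.
  assert (Hw1 : 0 < w1) by (unfold w1; lra).
  assert (Hzpos : 0 < z r0 t0) by lra.
  destruct (Req_dec t0 0) as [Et|Et].
  { subst t0. unfold z in Hzpos. rewrite Hi, Hi' in Hzpos by lra. lra. }
  destruct (Req_dec r0 0) as [Er|Er].
  { subst r0. unfold z in Hzpos. rewrite H0, H0' in Hzpos by lra. nra. }
  destruct (Req_dec r0 Rb) as [Er'|Er'].
  { subst r0. unfold z in Hzpos. rewrite HR, HR' in Hzpos by lra. nra. }
  assert (Hod : open_dom Rb r0 t0) by (split; lra).
  destruct (Hd r0 t0 Hod) as [Dr [Drr Dt]].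
  destruct (Hd' r0 t0 Hod) as [Dr' [Drr' Dt']].
  assert (Hg : forall x, 0 < x < Rb -> derivable_pt_lim (fun s => z s t0) x (vr x t0 - vr' x t0)).
  { intros x Hx. destruct (Hd x t0 ltac:(split; lra)) as [D1 _]. destruct (Hd' x t0 ltac:(split; lra)) as [D2 _].
    replace (vr x t0 - vr' x t0) with (vr x t0 - vr' x t0 - 0) by ring.
    apply (derivable_pt_lim_minus (fun s => u s t0 - ut s t0) (fun _ => eps * t0)).
    - apply (derivable_pt_lim_minus (fun s => u s t0) (fun s => ut s t0)); auto.
    - apply derivable_pt_lim_const. }
  assert (Hmr : forall x, 0 < x < Rb -> z x t0 <= z r0 t0) by (intros; apply Hmax; split; lra).
  assert (Hp : vr r0 t0 - vr' r0 t0 = 0).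
  { apply (max_d0 (fun s => z s t0) 0 Rb r0); [lra| apply Hg; lra | auto]. }
  assert (Hrr : vrr r0 t0 - vrr' r0 t0 <= 0).
  { apply (max_second (fun s => z s t0) (fun x => vr x t0 - vr' x t0) _ 0 Rb r0); auto; try lra.
    apply (derivable_pt_lim_minus (fun s => vr s t0) (fun s => vr' s t0)); auto. }
  assert (Htt : 0 <= vt r0 t0 - vt' r0 t0 - eps).
  { apply (max_left (fun s => z r0 s) 0 t0); [lra| |].
    - replace (vt r0 t0 - vt' r0 t0 - eps) with (vt r0 t0 - vt' r0 t0 - eps * 1) by ring.
      apply (derivable_pt_lim_minus (fun s => u r0 s - ut r0 s) (fun s => eps * s)).
      + apply (derivable_pt_lim_minus (fun s => u r0 s) (fun s => ut r0 s)); auto.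
      + apply (derivable_pt_lim_scal (fun s => s)). apply derivable_pt_lim_id.
    - intros; apply Hmax; split; lra. }
  rewrite (Heq r0 t0 Hod), (Heq' r0 t0 Hod) in Htt.
  assert (Eq : vr' r0 t0 = vr r0 t0) by lra. rewrite Eq in Htt.
  assert (Hn := Hneg r0 t0 Hod).
  assert (Hp3 : vr r0 t0 ^ 3 <= 0).
  { replace (vr r0 t0 ^ 3) with (vr r0 t0 * (vr r0 t0 * vr r0 t0)) by ring.
    assert (0 <= vr r0 t0 * vr r0 t0) by apply Rle_0_sqr. nra. }
  assert (Hw : 0 < u r0 t0 - ut r0 t0) by (unfold z in Hzpos; nra).
  assert ((u r0 t0 - ut r0 t0) * vr r0 t0 ^ 3 <= 0).
  { nra. }
  nra.
Qed.

Theorem mainTheorem12 (Rb : R) (n : nat) (u0 : R -> R) (u ut : R -> R -> R) :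
  0 < Rb -> (2 <= n)%nat ->
  radial_solution n Rb u0 u ->
  radial_solution n Rb u0 ut ->
  forall r t, 0 <= r <= Rb -> 0 <= t -> u r t = ut r t.
Proof.
  intros HRb _ Hu Hut r t Hr Ht. apply Rle_antisym.
  - exact (core n Rb u0 u ut HRb Hu Hut r t Hr Ht).
  - exact (core n Rb u0 ut u HRb Hut Hu r t Hr Ht).
Qed.
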